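(* Let $G$ be a graph, let $D$ be a minimum dominating set of $G$ and $\gamma=|D|$, and let $\nabla$ be an integer with $\nabla>\nabla_1^B(G)$. Let $$\hat D=\{v\in V(G): \text{for all } A\subseteq D\setminus\{v\} \text{ with } N(v)\subseteq N[A] \text{ we have } |A|>2\nabla-1\}.$$ Then $|\hat D\setminus D|<\rho(G)\cdot\gamma$.
   Context: Graphs are finite, undirected and simple. $N(v)$ is the open neighbourhood of $v$, $N[v]=N(v)\cup\{v\}$, and $N[A]=\bigcup_{a\in A}N[a]$. A dominating set is a set $D$ with $N[D]=V(G)$. A graph $H$ is a $1$-shallow minor of $G$ if it is obtained from $G$ by deleting vertices and edges and contracting pairwise vertex-disjoint connected subgraphs of radius at most $1$. $\nabla_1^B(G)$ is the maximum of $|E(H)|/|V(H)|$ over all bipartite $1$-shallow minors $H$ of $G$. The Hall ratio $\rho(G)$ is $\max\{|V(H)|/\alpha(H): H\subseteq G\}$, where $\alpha(H)$ is the size of a largest independent set of $H$. *)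

(* Defs.v *)
From HB Require Import structures.
From mathcomp Require Import all_boot all_order all_algebra.
Set Implicit Arguments. Unset Strict Implicit. Unset Printing Implicit Defensive.
Import Order.TTheory GRing.Theory Num.Theory.

(* A graph is T : finType with an edge relation e : rel T
   (assumed symmetric and irreflexive in the theorem). *)
Section Graphs.
Variables (T : finType) (e : rel T).

Definition nbh (v : T) : {set T} := [set u | e v u].
Definition cnbh (v : T) : {set T} := v |: nbh v.
Definition cnbhs (A : {set T}) : {set T} := \bigcup_(a in A) cnbh a.

Definition dominating (D : {set T}) : bool := cnbhs D == [set: T].

Definition min_dominating (D : {set T}) : bool :=
  dominating D && [forall D' : {set T}, dominating D' ==> (#|D| <= #|D'|)%N].

Definition subgraphb (S : {set T}) (F : {set {set T}}) : bool :=
  [forall f in F, [&& #|f| == 2%N, f \subset S &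
     [forall x in f, forall y in f, (x != y) ==> e x y]]].

Definition indepb (S : {set T}) (F : {set {set T}}) (I : {set T}) : bool :=
  (I \subset S) && [forall f in F, ~~ (f \subset I)].

Definition alpha (S : {set T}) (F : {set {set T}}) : nat :=
  \max_(I : {set T} | indepb S F I) #|I|.

(* Hall ratio rho(G) = max over subgraphs H of |V(H)| / alpha(H)
   (the empty subgraph contributes 0/0 = 0 by MathComp's convention). *)
Definition hall_ratio : rat :=
  \big[Num.max/0%R]_(H : {set T} * {set {set T}} | subgraphb H.1 H.2)
     ((#|H.1|%:R : rat) / (alpha H.1 H.2)%:R)%R.

(* H = ('I_n, E) is a 1-shallow minor of G: there are pairwise disjoint branch
   sets br i, each inducing a connected subgraph of radius <= 1 (a centre c i
   in br i adjacent to all other vertices of br i), such that every edge ij of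
   H is realised by a G-edge between br i and br j. *)
Definition one_shallow_minor (n : nat) (E : {set {set 'I_n}}) : bool :=
  [exists br : {ffun 'I_n -> {set T}}, exists c : {ffun 'I_n -> T},
    [&& [forall i, (c i \in br i) && (br i \subset cnbh (c i))],
        [forall i, forall j, (i != j) ==> [disjoint br i & br j]] &
        [forall f in E, forall i in f, forall j in f,
           (i != j) ==> [exists u in br i, exists v in br j, e u v]]]].

End Graphs.

Definition simple_edges (n : nat) (E : {set {set 'I_n}}) : bool :=
  [forall f in E, #|f| == 2%N].

Definition bipartiteb (n : nat) (E : {set {set 'I_n}}) : bool :=
  [exists col : {ffun 'I_n -> bool},
    [forall f in E, forall i in f, forall j in f, (i != j) ==> (col i != col j)]].

(* Every 1-shallow minor of G has at most |V(G)| vertices, hence is isomorphic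
   to a graph on 'I_n with n <= |V(G)|; so the max ranges over those. *)
Definition nabla1B (T : finType) (e : rel T) : rat :=
  \big[Num.max/0%R]_(n < #|T|.+1)
    \big[Num.max/0%R]_(E : {set {set 'I_n}} |
        [&& simple_edges E, bipartiteb E & one_shallow_minor e E])
      ((#|E|%:R : rat) / (n%:R))%R.

Definition dhat (T : finType) (e : rel T) (D : {set T}) (nab : int) : {set T} :=
  [set v | [forall A : {set T},
     ((A \subset D :\ v) && (nbh e v \subset cnbhs e A)) ==>
       (2 * nab - 1 < (#|A|%:Z))%R]].

(* Main.v *)
Require Import Defs.
From HB Require Import structures.
From mathcomp Require Import all_boot all_order all_algebra.
From mathcomp Require Import zify.
Import Order.TTheory GRing.Theory Num.Theory.
Set Implicit Arguments. Unset Strict Implicit. Unset Printing Implicit Defensive.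

Lemma nabla_lb (T : finType) (e : rel T) n (hn : (n < #|T|.+1)%N) (E : {set {set 'I_n}}) :
  simple_edges E -> bipartiteb E -> one_shallow_minor e E ->
  ((#|E|%:R : rat) / (n%:R) <= nabla1B e)%R.
Proof.
move=> h1 h2 h3; rewrite /nabla1B.
apply: le_trans (le_bigmax_cond _ _ (j := Ordinal hn) isT).
simpl.
by apply: le_bigmax_cond; rewrite h1 h2 h3.
Qed.

Lemma nabla_ge0 (T : finType) (e : rel T) : (0 <= nabla1B e)%R.
Proof. exact: bigmax_ge_id. Qed.

Lemma hall_lb (T : finType) (e : rel T) S F : subgraphb e S F ->
  ((#|S|%:R : rat) / (alpha S F)%:R <= hall_ratio e)%R.
Proof.
move=> h; rewrite /hall_ratio.
exact: (le_bigmax_cond _ _ (j := (S, F)) h).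
Qed.

Lemma alpha_pos (T : finType) (S : {set T}) (F : {set {set T}}) x : x \in S -> (forall f, f \in F -> #|f| = 2) ->
  (0 < alpha S F)%N.
Proof.
move=> xS hF; apply: (@leq_trans #|[set x]|); first by rewrite cards1.
apply: leq_bigmax_cond; apply/andP; split; first by rewrite sub1set.
apply/forallP => f; apply/implyP => fF; apply/negP => /subset_leq_card.
by rewrite cards1 hF.
Qed.

Lemma key (T : finType) (e : rel T) (e_sym : symmetric e) (e_irr : irreflexive e)
  (D : {set T}) (hDdom : dominating e D) (nab : int) (m : nat) (hm : nab = Posz m)
  (I : {set T}) (hI : I \subset dhat e D nab) (hID : [disjoint I & D])
  (t0 : T) (indep : forall x y, x \in I -> y \in I -> ~~ e x y) :
  exists n (E : {set {set 'I_n}}), [/\ [&& (0 < n)%N, (n <= #|T|)%N & (n <= #|I| + #|D|)%N],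
     (#|I| * (2 * m) <= #|E|)%N, simple_edges E, bipartiteb E & one_shallow_minor e E].
Proof.
have domP u : exists2 d, d \in D & u \in cnbh e d.
  have : u \in cnbhs e D by rewrite (eqP hDdom) inE.
  by case/bigcupP=> d dD ud; exists d.
pose dom u := if u \in D then u else
  if [pick d in D | u \in cnbh e d] is Some d then d else u.
have domD u : dom u \in D.
  rewrite /dom; case: ifP => // _; case: pickP => [d /andP[]//|none].
  by case: (domP u) => d dD ud; move: (none d); rewrite dD ud.
have domN u : u \in cnbh e (dom u).
  rewrite /dom; case: ifP => [_|_]; first by rewrite /cnbh setU11.
  case: pickP => [d /andP[]//|none].
  by case: (domP u) => d dD ud; move: (none d); rewrite dD ud.
have domid u : u \in D -> dom u = u by rewrite /dom => ->.
have IDn x : x \in I -> x \notin D.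
  by move=> xI; rewrite (disjointFr hID xI).
set W := I :|: D.
have [x0 x0D _] := domP t0.
have x0W : x0 \in W by rewrite inE x0D orbT.
pose n := #|W|.
pose wv (i : 'I_n) : T := enum_val i.
pose idx : T -> 'I_n := enum_rank_in x0W.
have wvW i : wv i \in W by apply: enum_valP.
have idxK : {in W, cancel idx wv} by apply: enum_rankK_in.
have wv_inj : injective wv by apply: enum_val_inj.
have idx_inj : {in W &, injective idx}.
  by move=> x y xW yW h; rewrite -(idxK x xW) -(idxK y yW) h.
pose br := [ffun i => if wv i \in I then [set wv i] else [set u | (u \notin I) && (dom u == wv i)]].
pose c := [ffun i => wv i].
pose Q := [set p : T * T | [&& p.1 \in I, p.2 \in D & [exists u, [&& u \notin I, dom u == p.2 & e p.1 u]]]].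
pose E := [set [set idx p.1; idx p.2] | p in Q].
have IW x : x \in I -> x \in W by move=> xI; rewrite inE xI.
have DW x : x \in D -> x \in W by move=> xD; rewrite inE xD orbT.
have Qneq p : p \in Q -> idx p.1 != idx p.2.
  rewrite inE => /and3P[p1I p2D _]; apply/negP => /eqP/(congr1 wv).
  rewrite (idxK _ (IW _ p1I)) (idxK _ (DW _ p2D)) => h; move: (IDn _ p1I); by rewrite h p2D.
have QP p : p \in Q -> [/\ p.1 \in I, p.2 \in D, wv (idx p.1) = p.1 & wv (idx p.2) = p.2].
  rewrite inE => /and3P[p1I p2D _]; split => //.
    exact: idxK (IW _ p1I).
  exact: idxK (DW _ p2D).
have cardE : #|E| = #|Q|.
  apply: card_in_imset => p q pQ qQ h.
  have [p1I p2D wp1 wp2] := QP p pQ; have [q1I q2D wq1 wq2] := QP q qQ.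
  have h1 : idx p.1 \in [set idx q.1; idx q.2] by rewrite -h setU11.
  have h2 : idx p.2 \in [set idx q.1; idx q.2] by rewrite -h !inE eqxx orbT.
  move: h1 h2; rewrite !inE => /orP[]/eqP/(congr1 wv); rewrite ?wp1 ?wq1 ?wq2 => e1.
  + move=> /orP[]/eqP/(congr1 wv); rewrite ?wp2 ?wq1 ?wq2 => e2.
    * by move: (IDn _ q1I); rewrite -e2 p2D.
    * by case: p q {pQ qQ h wp1 wp2 wq1 wq2 p1I p2D q1I q2D} e1 e2 => [? ?] [? ?] /= -> ->.
  + by move: (IDn _ p1I); rewrite e1 q2D.
pose A a := [set d | (d \in D) && [exists u, [&& u \notin I, dom u == d & e a u]]].
have cardQ : #|Q| = \sum_(a in I) #|A a|.
  rewrite -sum1_card (eq_bigl (fun p => (p.1 \in I) && (p.2 \in A p.1))); last first.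
    by move=> p; rewrite !inE andbA.
  rewrite -(pair_big_dep (fun a => a \in I) (fun a d => d \in A a) (fun _ _ => 1%N)) /=.
  by apply: eq_bigr => a _; rewrite sum1_card.
have Abig a : a \in I -> (2 * m <= #|A a|)%N.
  move=> aI; move/subsetP: hI => /(_ a aI); rewrite inE => /forallP /(_ (A a)) /implyP.
  move=> H; have {}H := H _.
  have aD := IDn _ aI.
  have : (2 * nab - 1 < Posz #|A a|)%R.
    apply: H; apply/andP; split.
      apply/subsetP => d; rewrite !inE => /andP[dD _]; rewrite dD andbT.
      by apply: contraNneq aD => <-.
    apply/subsetP => u; rewrite inE => eau.
    have uI : u \notin I by apply/negP => uI; move: (indep a u aI uI); rewrite eau.
    apply/bigcupP; exists (dom u); last exact: domN.
    rewrite inE domD /=; apply/existsP; exists u; by rewrite uI eqxx eau.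
  rewrite hm; lia.
exists n, E; split.
- apply/and3P; split; [by apply/card_gt0P; exists x0 | exact: max_card | exact: leq_card_setU].  
- rewrite cardE cardQ -sum_nat_const; apply: leq_sum => a aI; exact: Abig.
- apply/forallP => f; apply/implyP => /imsetP[p pQ ->]; by rewrite cards2 Qneq.
- apply/existsP; exists [ffun i => wv i \in I]; apply/forallP => f; apply/implyP => /imsetP[p pQ ->].
  have [p1I p2D wp1 wp2] := QP p pQ.
  have p2I : (p.2 \in I) = false by apply: disjointFl hID p2D.
  apply/forallP => i; apply/implyP => iin; apply/forallP => j; apply/implyP => jin; apply/implyP => ij.
  rewrite !ffunE.
  move: iin jin ij; rewrite !inE => /orP[]/eqP-> /orP[]/eqP->; rewrite ?eqxx //= => _;
   by rewrite wp1 wp2 p1I p2I.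
- apply/existsP; exists br; apply/existsP; exists c; apply/and3P; split.
  + apply/forallP => i; rewrite !ffunE; case: ifP => wI.
      by rewrite inE eqxx sub1set /cnbh setU11.
    have wD : wv i \in D by move: (wvW i); rewrite inE wI.
    rewrite inE wI domid // eqxx /=; apply/subsetP => u; rewrite inE => /andP[_ /eqP <-].
    exact: domN.
  + apply/forallP => i; apply/forallP => j; apply/implyP => ij.
    have wij : wv i != wv j by apply: contra ij => /eqP/wv_inj ->.
    rewrite !ffunE disjoints_subset; apply/subsetP => u.
    case: ifP => wiI; case: ifP => wjI; rewrite !inE.
    * by move/eqP->.
    * by move/eqP->; rewrite wiI.
    * by case/andP=> uI _; apply: contraNneq uI => ->.
    * case/andP=> _ /eqP ->; rewrite negb_and negbK; apply/orP; right; exact: wij.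
  + apply/forallP => f; apply/implyP => /imsetP[p pQ ->].
    have [p1I p2D wp1 wp2] := QP p pQ.
    have p2I : (p.2 \in I) = false by apply: disjointFl hID p2D.
    have := pQ; rewrite inE => /and3P[_ _ /existsP[u0 /and3P[u0I /eqP du0 eu0]]].
    have b1 : br (idx p.1) = [set p.1] by rewrite ffunE wp1 p1I.
    have b2 : u0 \in br (idx p.2) by rewrite ffunE wp2 p2I inE u0I du0 eqxx.
    apply/forallP => i; apply/implyP => iin; apply/forallP => j; apply/implyP => jin; apply/implyP => ij.
    move: iin jin ij; rewrite !inE => /orP[]/eqP-> /orP[]/eqP->; rewrite ?eqxx //= => _.
    * apply/existsP; exists p.1; rewrite b1 set11 /=; apply/existsP; exists u0; by rewrite b2 eu0.
    * apply/existsP; exists u0; rewrite b2 /=; apply/existsP; exists p.1; by rewrite b1 set11 e_sym eu0.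
Qed.

Theorem lemma3 (T : finType) (e : rel T)
  (e_sym : symmetric e) (e_irr : irreflexive e) (T_nonempty : (0 < #|T|)%N)
  (D : {set T}) (hD : min_dominating e D)
  (nab : int) (hnab : (nabla1B e < nab%:~R)%R) :
  ((#|dhat e D nab :\: D|%:R : rat) < hall_ratio e * (#|D|%:R))%R.
Proof.
have hDdom : dominating e D by case/andP: hD.
case/card_gt0P: T_nonempty => t0 _.
have D0 : (0 < #|D|)%N.
  have : t0 \in cnbhs e D by rewrite (eqP hDdom) inE.
  by case/bigcupP=> d dD _; apply/card_gt0P; exists d.
have nab0 : (0 < nab)%R.
  by rewrite -(ltr0z rat); apply: le_lt_trans (nabla_ge0 e) hnab.
have [m hm] : exists m, nab = Posz m by exists (absz nab); lia.
set X := dhat e D nab :\: D.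
pose F := [set f : {set T} | [&& #|f| == 2, f \subset X & [forall x in f, forall y in f, (x != y) ==> e x y]]].
have sub : subgraphb e X F by apply/forallP => f; apply/implyP; rewrite inE.
have F2 f : f \in F -> #|f| = 2 by rewrite inE => /and3P[/eqP].
have claim J : indepb X F J -> (#|J| < #|D|)%N.
  case/andP=> JX /forallP Jind.
  have indep x y : x \in J -> y \in J -> ~~ e x y.
    move=> xJ yJ; apply/negP => exy.
    have xy : x != y by apply: contraTneq exy => ->; rewrite e_irr.
    have fF : [set x; y] \in F.
      rewrite inE cards2 xy /=; apply/andP; split.
        by rewrite subUset !sub1set (subsetP JX _ xJ) (subsetP JX _ yJ).
      apply/forallP => a; apply/implyP; rewrite !inE => /orP[]/eqP->;
      apply/forallP => b; apply/implyP; rewrite !inE => /orP[]/eqP->; by rewrite ?eqxx //= ?exy ?implybT // e_sym exy implybT.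
    move: (Jind [set x; y]); rewrite fF /= subUset !sub1set xJ yJ.
    by [].
  have JD : [disjoint J & D].
    rewrite disjoints_subset; apply/subsetP => x /(subsetP JX); rewrite !inE.
    by case/andP.
  have Jdhat : J \subset dhat e D nab.
    apply/subsetP => x /(subsetP JX); rewrite inE; by case/andP.
  have [n [E [/and3P[n0 nT nJD] hE s b o]]] := key e_sym e_irr hDdom hm Jdhat JD t0 indep.
  rewrite ltnNge; apply/negP => DJ.
  have H := @nabla_lb T e n nT E s b o.
  have H2 : ((m%:R : rat) <= #|E|%:R / n%:R)%R.
    rewrite ler_pdivlMr ?ltr0n // -natrM ler_nat.
    nia.
  move: hnab; rewrite hm => hn'.
  have : ((m%:R : rat) < m%:R)%R := le_lt_trans (le_trans H2 H) hn'.
  by rewrite ltxx.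
have alphaD : (alpha X F < #|D|)%N.
  rewrite -(prednK D0) ltnS; apply/bigmax_leqP => J hJ; rewrite -ltnS prednK //; exact: claim.
have hr := hall_lb sub.
case: (set_0Vmem X) => [X0 | [x xX]].
- rewrite X0 cards0; apply: mulr_gt0; last by rewrite ltr0n.
  have sub1 : subgraphb e [set t0] set0 by apply/forallP => f; rewrite inE.
  apply: lt_le_trans (hall_lb sub1).
  rewrite cards1 mul1r invr_gt0 ltr0n.
  by apply: (alpha_pos (x := t0)) => [|f]; rewrite inE.
- have a0 : (0 < alpha X F)%N by apply: (alpha_pos xX).
  apply: lt_le_trans (ler_wpM2r (ler0n _ _) hr).
  rewrite mulrAC ltr_pdivlMr ?ltr0n // -!natrM ltr_nat ltn_pmul2l //.
  by apply/card_gt0P; exists x.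
Qed.
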